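(* Let $\mathcal{X}$ (with metric $d_{\mathcal X}$) and $\Theta$ be compact metric spaces and let $f_\theta:\mathcal{X}\to\mathbb{R}^p$, $\theta\in\Theta$, be functions such that for each $\theta$ the image $f_\theta(\mathcal{X})$ spans $\mathbb{R}^p$ and $(x,\theta)\mapsto f_\theta(x)$ is continuous on $\mathcal{X}\times\Theta$. Suppose $p\ge 2$. Let $n_{\rm st}\in\mathbb{N}$ and $x_1,\ldots,x_{n_{\rm st}}\in\mathcal{X}$ be such that $M(\xi_{n_{\rm st}},\theta)$ is positive definite for all $\theta\in\Theta$, where $\xi_n=\frac1n\sum_{i=1}^n\delta_{x_i}$. Let $(\theta_n)_{n\ge n_{\rm st}}$ be an arbitrary sequence in $\Theta$, and let the points $x_{n+1}$, $n\ge n_{\rm st}$, be defined recursively by $$x_{n+1}\in\arg\max_{x\in\mathcal{X}} f_{\theta_n}^{\mathsf T}(x)\,M^{-1}(\xi_n,\theta_n)\,f_{\theta_n}(x).$$ Let $\varepsilon>0$ be given. Then there exist $d>0$ and $n_0\ge n_{\rm st}$ such that $\xi_n(S)\le \frac1p+\varepsilon$ for all nonempty $S\subseteq\mathcal{X}$ with $\mathrm{diam}(S)\le d$ and all $n\ge n_0$.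
   Context: A design is a finitely supported probability measure on $\mathcal{X}$; $\delta_x$ is the point mass at $x$. The information matrix of a design $\xi$ at $\theta$ is $M(\xi,\theta)=\sum_{x\in\mathrm{supp}(\xi)}\xi(x)f_\theta(x)f_\theta^{\mathsf T}(x)$ (it is positive definite for all $\xi_n$, $n\ge n_{\rm st}$, by the choice of the starting points). $\mathrm{diam}(S)=\sup\{d_{\mathcal X}(x,z):x,z\in S\}$. The recursion is the (deterministic path of the) adaptive Wynn algorithm with arbitrary parameter estimates $\theta_n$. *)

(* Defs.v *)
From HB Require Import structures.
From mathcomp Require Import all_boot all_order all_algebra.
From mathcomp Require Import all_classical all_reals all_analysis.
Set Implicit Arguments. Unset Strict Implicit. Unset Printing Implicit Defensive.
Import Order.TTheory GRing.Theory Num.Theory.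
Import numFieldTopology.Exports numFieldNormedType.Exports.
Local Open Scope classical_set_scope.
Local Open Scope ring_scope.

(* Regression vectors f_theta(x) are represented as row vectors 'rV[R]_p,
   so f f^T of the paper is (f x)^T *m (f x) (a p x p matrix). *)

(* The points x_1, x_2, ... are given by x : nat -> X (x 0 is unused). *)

Definition design {R : realType} {X : Type} (x : nat -> X) (n : nat) (S : set X) : R :=
  n%:R^-1 * \sum_(1 <= i < n.+1) (if `[< S (x i) >] then 1 else 0).

(* M(xi_n, theta) = sum_{x in supp xi_n} xi_n(x) f f^T
                  = (1/n) sum_{i=1}^n f_theta(x_i) f_theta(x_i)^T. *)
Definition infomat {R : realType} {X Th : Type} {p : nat}
  (f : Th -> X -> 'rV[R]_p) (x : nat -> X) (n : nat) (th : Th) : 'M[R]_p :=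
  n%:R^-1 *: \sum_(1 <= i < n.+1) ((f th (x i))^T *m f th (x i)).

Definition posdef {R : realType} {p : nat} (A : 'M[R]_p) : Prop :=
  A^T = A /\ forall v : 'rV[R]_p, v != 0 -> 0 < (v *m A *m v^T) 0 0.

Definition wynn_crit {R : realType} {X Th : Type} {p : nat}
  (f : Th -> X -> 'rV[R]_p) (x : nat -> X) (n : nat) (th : Th) (z : X) : R :=
  (f th z *m invmx (infomat f x n th) *m (f th z)^T) 0 0.

Definition diam_le {R : realType} {X : metricType R} (S : set X) (d : R) : Prop :=
  forall a b, S a -> S b -> mdist a b <= d.

(* Main.v *)
Require Import Defs.
From HB Require Import structures.
From mathcomp Require Import all_boot all_order all_algebra.
From mathcomp Require Import all_classical all_reals all_analysis.
From mathcomp Require Import ring lra.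
Import Order.TTheory GRing.Theory Num.Theory.
Import numFieldTopology.Exports numFieldNormedType.Exports.
Local Open Scope classical_set_scope.
Local Open Scope ring_scope.

Set Implicit Arguments. Unset Strict Implicit. Unset Printing Implicit Defensive.


Definition qf {R : realType} {p : nat} (N : 'M[R]_p) (a b : 'rV[R]_p) : R :=
  (a *m N *m b^T) 0 0.

Definition gram {R : realType} {p : nat} (F : nat -> 'rV[R]_p) (k : nat) : 'M[R]_p :=
  \sum_(1 <= i < k.+1) ((F i)^T *m F i).

Definition sq {R : realType} {p : nat} (v : 'rV[R]_p) : R := \sum_j (v 0 j) ^+ 2.

Lemma mx11E {R : realType} n (A : 'M[R]_1) (B : 'M[R]_(1, n)) : A *m B = A 0 0 *: B.
Proof. by rewrite {1}(mx11_scalar A) mul_scalar_mx. Qed.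

Lemma mx11M {R : realType} (A B : 'M[R]_1) : (A *m B) 0 0 = A 0 0 * B 0 0.
Proof. by rewrite mx11E mxE. Qed.

Lemma qfDl {R : realType} p (N : 'M[R]_p) a b c : qf N (a + b) c = qf N a c + qf N b c.
Proof. by rewrite /qf !mulmxDl mxE. Qed.

Lemma qfDr {R : realType} p (N : 'M[R]_p) a b c : qf N a (b + c) = qf N a b + qf N a c.
Proof. by rewrite /qf linearD /= !mulmxDr mxE. Qed.

Lemma qfZl {R : realType} p (N : 'M[R]_p) s a b : qf N (s *: a) b = s * qf N a b.
Proof. by rewrite /qf -!scalemxAl mxE. Qed.

Lemma qfZr {R : realType} p (N : 'M[R]_p) s a b : qf N a (s *: b) = s * qf N a b.
Proof. by rewrite /qf linearZ /= -!scalemxAr mxE. Qed.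

Lemma qfNr {R : realType} p (N : 'M[R]_p) a b : qf N a (- b) = - qf N a b.
Proof. by rewrite -scaleN1r qfZr mulN1r. Qed.

Lemma qfNl {R : realType} p (N : 'M[R]_p) a b : qf N (- a) b = - qf N a b.
Proof. by rewrite -scaleN1r qfZl mulN1r. Qed.

Lemma qf0r {R : realType} p (N : 'M[R]_p) a : qf N a 0 = 0.
Proof. by rewrite /qf linear0 mulmx0 mxE. Qed.

Lemma qf_sumr {R : realType} p (N : 'M[R]_p) a (I : Type) (r : seq I) (P : pred I)
  (b : I -> 'rV[R]_p) :
  qf N a (\sum_(i <- r | P i) b i) = \sum_(i <- r | P i) qf N a (b i).
Proof. by apply: (big_morph (qf N a)); [exact: qfDr | exact: qf0r]. Qed.

Lemma qf_sym {R : realType} p (N : 'M[R]_p) a b : N^T = N -> qf N a b = qf N b a.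
Proof.
move=> hN; rewrite /qf -(trmxK (a *m N *m b^T)) [LHS]mxE.
by rewrite !trmx_mul hN trmxK mulmxA.
Qed.

Lemma gram_qf {R : realType} p (F : nat -> 'rV[R]_p) k (v w : 'rV[R]_p) :
  (v *m gram F k *m w^T) 0 0 =
  \sum_(1 <= i < k.+1) ((v *m (F i)^T) 0 0 * (F i *m w^T) 0 0).
Proof.
rewrite /gram mulmx_sumr mulmx_suml summxE; apply: eq_bigr => i _.
by rewrite !mulmxA -mx11M -!mulmxA.
Qed.

Lemma gram_sym {R : realType} p (F : nat -> 'rV[R]_p) k : (gram F k)^T = gram F k.
Proof.
rewrite /gram raddf_sum /=; apply: eq_bigr => i _.
by rewrite trmx_mul trmxK.
Qed.

Lemma dot_sym {R : realType} p (a b : 'rV[R]_p) : (a *m b^T) 0 0 = (b *m a^T) 0 0.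
Proof. by rewrite -(trmxK (a *m b^T)) [LHS]mxE trmx_mul trmxK. Qed.

Definition psd {R : realType} {p : nat} (N : 'M[R]_p) := forall v, 0 <= qf N v v.

Lemma qf_expand {R : realType} p (N : 'M[R]_p) a b t : N^T = N ->
  qf N (t *: a - b) (t *: a - b) = t ^+ 2 * qf N a a - 2 * t * qf N a b + qf N b b.
Proof.
move=> hN; rewrite qfDl !qfDr !qfNl !qfNr !qfZl !qfZr (qf_sym a b hN).
ring.
Qed.

Lemma amgm {R : realType} p (N : 'M[R]_p) a b t : N^T = N -> psd N ->
  2 * t * qf N a b <= t ^+ 2 * qf N a a + qf N b b.
Proof.
move=> hN hp; have := hp (t *: a - b); rewrite qf_expand //; lra.
Qed.

Lemma amgm_abs {R : realType} p (N : 'M[R]_p) a b : N^T = N -> psd N ->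
  2 * `|qf N a b| <= qf N a a + qf N b b.
Proof.
move=> hN hp; have h1 := amgm a b 1 hN hp; have h2 := amgm a b (-1) hN hp.
rewrite expr1n in h1; rewrite sqrrN expr1n in h2.
by case: (ler0P (qf N a b)) => h; lra.
Qed.

Lemma real_cs {R : realType} (A B C : R) : 0 <= A -> 0 <= C ->
  (forall t, 2 * t * B <= t ^+ 2 * A + C) -> B ^+ 2 <= A * C.
Proof.
move=> hA hC h; case: (ltrP 0 A) => hA0.
  have htA : B = (B / A) * A by rewrite divfK // lt0r_neq0.
  move: (h (B / A)) htA; move: (B / A) => t h1 htA; rewrite htA in h1 *.
  have e : 2 * t * (t * A) = 2 * (t ^+ 2 * A) by ring.
  have h2 : t ^+ 2 * A <= C by move: h1; rewrite e; lra.
  have -> : (t * A) ^+ 2 = A * (t ^+ 2 * A) by ring.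
  by rewrite ler_wpM2l.
have A0 : A = 0 by apply/eqP; rewrite eq_le hA0 hA.
rewrite A0 mul0r; case: (eqVneq B 0) => [->|hB]; first by rewrite expr0n.
have := h ((C + 1) / (2 * B)); rewrite A0 mulr0 add0r.
have -> : 2 * ((C + 1) / (2 * B)) * B = C + 1.
  by field; rewrite hB.
lra.
Qed.

Lemma cs {R : realType} p (N : 'M[R]_p) a b : N^T = N -> psd N ->
  qf N a b ^+ 2 <= qf N a a * qf N b b.
Proof. by move=> hN hp; apply: real_cs => // t; apply: amgm. Qed.

Lemma qf_scale {R : realType} p (G : 'M[R]_p) s a b : qf (s *: G) a b = s * qf G a b.
Proof. by rewrite /qf -scalemxAr -scalemxAl mxE. Qed.

Lemma qf_gram_sq {R : realType} p (F : nat -> 'rV[R]_p) k v :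
  qf (gram F k) v v = \sum_(1 <= i < k.+1) ((v *m (F i)^T) 0 0) ^+ 2.
Proof. by rewrite /qf gram_qf; apply: eq_bigr => i _; rewrite (dot_sym (F i)) expr2. Qed.

Lemma sum_nat_ge0 {R : realType} m n (g : nat -> R) :
  (forall i, 0 <= g i) -> 0 <= \sum_(m <= i < n) g i.
Proof. by move=> h; apply: sumr_ge0 => i _. Qed.

Lemma sum_nat_mono {R : realType} m n1 n2 (g : nat -> R) : (n1 <= n2)%N ->
  (forall i, 0 <= g i) -> \sum_(m <= i < n1) g i <= \sum_(m <= i < n2) g i.
Proof.
move=> hn h; have [hm|hm] := leqP m n1.
  rewrite [X in _ <= X](big_cat_nat hm hn) /= lerDl; exact: sum_nat_ge0.
by rewrite big_geq ?(ltnW hm) //; apply: sum_nat_ge0.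
Qed.

Lemma sum_nat_term {R : realType} m n (g : nat -> R) i : (m <= i < n)%N ->
  (forall i, 0 <= g i) -> g i <= \sum_(m <= i < n) g i.
Proof.
move=> hi h; rewrite (bigD1_seq i) /= ?mem_index_iota ?iota_uniq //.
by rewrite lerDl; apply: sumr_ge0.
Qed.

Lemma psd_gram {R : realType} p (F : nat -> 'rV[R]_p) k : psd (gram F k).
Proof. by move=> v; rewrite qf_gram_sq; apply: sum_nat_ge0 => i; apply: sqr_ge0. Qed.

Lemma gram_mono {R : realType} p (F : nat -> 'rV[R]_p) k1 k2 v : (k1 <= k2)%N ->
  qf (gram F k1) v v <= qf (gram F k2) v v.
Proof.
by move=> h; rewrite !qf_gram_sq; apply: sum_nat_mono => // i; apply: sqr_ge0.
Qed.

Lemma unit_of_pd {R : realType} p (M : 'M[R]_p) :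
  (forall v, v != 0 -> 0 < qf M v v) -> M \in unitmx.
Proof.
move=> h; rewrite -row_free_unit; apply: inj_row_free => v hv.
apply/eqP; apply: contraT => /h; by rewrite /qf hv mul0mx mxE ltxx.
Qed.


Lemma infoT {R : realType} p (F : nat -> 'rV[R]_p) k :
  (k%:R^-1 *: gram F k)^T = k%:R^-1 *: gram F k.
Proof. by rewrite linearZ /= gram_sym. Qed.

Lemma invT {R : realType} p (F : nat -> 'rV[R]_p) k :
  (invmx (k%:R^-1 *: gram F k))^T = invmx (k%:R^-1 *: gram F k).
Proof. by rewrite trmx_inv infoT. Qed.

Lemma qf_inv {R : realType} p (M : 'M[R]_p) v : M \in unitmx -> M^T = M ->
  qf (invmx M) v v = qf M (v *m invmx M) (v *m invmx M).
Proof.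
move=> hu hT; rewrite /qf trmx_mul trmx_inv hT !mulmxA.
by rewrite -(mulmxA v (invmx M) M) (mulVmx hu) mulmx1.
Qed.

Lemma psd_inv {R : realType} p (M : 'M[R]_p) : M \in unitmx -> M^T = M -> psd M ->
  psd (invmx M).
Proof. by move=> hu hT hp v; rewrite qf_inv. Qed.

Lemma trace_id {R : realType} p (F : nat -> 'rV[R]_p) k : (0 < k)%N ->
  (k%:R^-1 *: gram F k) \in unitmx ->
  \sum_(1 <= i < k.+1) qf (invmx (k%:R^-1 *: gram F k)) (F i) (F i) = k%:R * p%:R.
Proof.
move=> hk hu; set M := k%:R^-1 *: gram F k; set N := invmx M.
have e : forall a : 'rV[R]_p, qf N a a = \tr (a^T *m a *m N).
  by move=> a; rewrite /qf -trace_mx11 mxtrace_mulC mulmxA.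
under eq_bigr do rewrite e.
rewrite -raddf_sum /= -mulmx_suml.
have -> : \sum_(1 <= i < k.+1) (F i)^T *m F i = k%:R *: M.
  by rewrite /M scalerA divff ?scale1r // pnatr_eq0 -lt0n.
by rewrite -scalemxAl mulmxV // mxtraceZ mxtrace1.
Qed.

Lemma sumsq_id {R : realType} p (F : nat -> 'rV[R]_p) k v : (0 < k)%N ->
  (k%:R^-1 *: gram F k) \in unitmx ->
  \sum_(1 <= i < k.+1) (qf (invmx (k%:R^-1 *: gram F k)) v (F i)) ^+ 2 =
  k%:R * qf (invmx (k%:R^-1 *: gram F k)) v v.
Proof.
move=> hk hu; set M := k%:R^-1 *: gram F k; set N := invmx M.
have hN : N^T = N by rewrite /N /M invT.
have hG : gram F k = k%:R *: M.
  by rewrite /M scalerA divff ?scale1r // pnatr_eq0 -lt0n.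
have e1 : ((v *m N) *m gram F k *m (v *m N)^T) 0 0 = k%:R * qf N v v.
  rewrite hG -scalemxAr -scalemxAl mxE /qf trmx_mul hN.
  by rewrite -(mulmxA v N M) (mulVmx hu) mulmx1 mulmxA.
rewrite -e1 gram_qf.
apply: eq_bigr => i _; rewrite expr2 {2}(qf_sym v (F i) hN) /qf.
by rewrite trmx_mul hN mulmxA.
Qed.

Lemma decomp {R : realType} p (F : nat -> 'rV[R]_p) k w : (0 < k)%N ->
  (k%:R^-1 *: gram F k) \in unitmx ->
  w = \sum_(1 <= i < k.+1)
        (k%:R^-1 * qf (invmx (k%:R^-1 *: gram F k)) w (F i)) *: F i.
Proof.
move=> hk hu; set M := k%:R^-1 *: gram F k; set N := invmx M.
have -> : \sum_(1 <= i < k.+1) (k%:R^-1 * qf N w (F i)) *: F i = w *m N *m M.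
  rewrite /M /gram -scalemxAr mulmx_sumr scaler_sumr; apply: eq_bigr => i _.
  by rewrite mulmxA mx11E -scalerA.
by rewrite -mulmxA mulVmx // mulmx1.
Qed.

Lemma dot_e {R : realType} p (v : 'rV[R]_p) (j : 'I_p) : (v *m ('e_j : 'rV[R]_p)^T) 0 0 = v 0 j.
Proof. by rewrite trmx_delta -colE mxE. Qed.

Lemma lam_single {R : realType} p (M : 'M[R]_p) : M \in unitmx -> M^T = M -> psd M ->
  exists2 l : R, 0 < l & forall v, l * sq v <= qf M v v.
Proof.
move=> hu hT hp; set N := invmx M.
have hN : N^T = N by rewrite /N trmx_inv hT.
have pN : psd N by apply: psd_inv.
set T := \sum_j qf N 'e_j 'e_j.
have T0 : 0 <= T by apply: sumr_ge0 => j _; apply: pN.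
exists (1 + T)^-1; first by rewrite invr_gt0; lra.
move=> v; rewrite mulrC ler_pdivrMr; last by lra.
have h1 : sq v <= qf M v v * T.
  rewrite /sq /T mulr_sumr; apply: ler_sum => j _.
  have ej : v 0 j = qf M v ('e_j *m N).
    by rewrite /qf trmx_mul hN -(mulmxA v M) (mulmxA M) mulmxV // mul1mx dot_e.
  rewrite ej qf_inv //; exact: cs.
have := hp v; rewrite mulrDr mulr1; lra.
Qed.

Lemma qf_entries {R : realType} p (D : 'M[R]_p) v :
  qf D v v = \sum_l (\sum_j v 0 j * D j l) * v 0 l.
Proof.
by rewrite /qf mxE; apply: eq_bigr => l _; rewrite !mxE.
Qed.

Lemma perturb {R : realType} p (D : 'M[R]_p) v a :
  (forall j l, `|D j l| <= a) -> `|qf D v v| <= a * p%:R * sq v.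
Proof.
move=> hD; rewrite qf_entries.
apply: (le_trans (ler_norm_sum _ _ _)).
apply: (@le_trans _ _ (\sum_(l < p) \sum_(j < p) (a / 2 * (v 0 j ^+ 2 + v 0 l ^+ 2)))).
  apply: ler_sum => l _; rewrite mulr_suml.
  apply: (le_trans (ler_norm_sum _ _ _)); apply: ler_sum => j _.
  rewrite !normrM.
  have h1 := hD j l; have h2 := normr_ge0 (D j l).
  have h3 : `|v 0 j| * `|v 0 l| <= (v 0 j ^+ 2 + v 0 l ^+ 2) / 2.
    rewrite -(real_normK (num_real (v 0 j))) -(real_normK (num_real (v 0 l))).
    have := sqr_ge0 (`|v 0 j| - `|v 0 l|); rewrite sqrrB -mulr_natr; lra.
  have h6 : 0 <= `|v 0 j| * `|v 0 l| by apply: mulr_ge0.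
  have -> : `|v 0 j| * `|D j l| * `|v 0 l| = (`|v 0 j| * `|v 0 l|) * `|D j l| by ring.
  have -> : a / 2 * (v 0 j ^+ 2 + v 0 l ^+ 2) = (v 0 j ^+ 2 + v 0 l ^+ 2) / 2 * a by ring.
  exact: ler_pM.
have -> : \sum_(l < p) \sum_(j < p) (a / 2 * (v 0 j ^+ 2 + v 0 l ^+ 2)) =
          a / 2 * (\sum_(l < p) \sum_(j < p) v 0 j ^+ 2 + \sum_(l < p) \sum_(j < p) v 0 l ^+ 2).
  rewrite -big_split mulr_sumr /=; apply: eq_bigr => l _.
  by rewrite -big_split mulr_sumr.
rewrite [X in _ + X]exchange_big /= /sq !sumr_const card_ord.
rewrite -!(mulr_natr (\sum_(j < p) v 0 j ^+ 2)); lra.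
Qed.

Lemma sq_term {R : realType} p (u : 'rV[R]_p) j : u 0 j ^+ 2 <= sq u.
Proof.
rewrite /sq (bigD1 j) //= lerDl; apply: sumr_ge0 => i _; apply: sqr_ge0.
Qed.

Lemma decomp_bound {R : realType} p (F : nat -> 'rV[R]_p) k l : (0 < k)%N ->
  (k%:R^-1 *: gram F k) \in unitmx -> 0 < l ->
  (forall v, l * sq v <= qf (k%:R^-1 *: gram F k) v v) ->
  forall j : 'I_p, exists c : nat -> R,
    'e_j = \sum_(1 <= i < k.+1) c i *: F i /\
    forall i, (1 <= i <= k)%N -> `|c i| <= l^-1 + p%:R.
Proof.
move=> hk hu hl hlam j; set M := k%:R^-1 *: gram F k; set N := invmx M.
have hT : M^T = M by rewrite /M infoT.
have hN : N^T = N by rewrite /N /M invT.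
have hpM : psd M by move=> v; rewrite /M qf_scale; apply: mulr_ge0; [rewrite invr_ge0 ler0n|apply: psd_gram].
have pN : psd N by apply: psd_inv.
exists (fun i => k%:R^-1 * qf N 'e_j (F i)); split; first exact: decomp.
move=> i hi.
have h1 : qf N 'e_j 'e_j <= l^-1.
  pose u : 'rV[R]_p := 'e_j *m N.
  have e1 : qf N 'e_j 'e_j = u 0 j by rewrite /qf dot_e.
  have e2 : qf N 'e_j 'e_j = qf M u u by rewrite qf_inv.
  have h3 : l * u 0 j ^+ 2 <= u 0 j.
    have := hlam u; rewrite -e2 e1 => h; apply: le_trans h.
    by apply: ler_wpM2l; [exact: ltW|exact: (sq_term u j)].
  case: (lerP (u 0 j) 0) => h4; first by rewrite e1 (le_trans h4) // invr_ge0 ltW.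
  rewrite e1 -(ler_pM2l hl) mulfV ?lt0r_neq0 //.
  have : l * u 0 j ^+ 2 = (l * u 0 j) * u 0 j by rewrite expr2 mulrA.
  move=> e3; rewrite e3 in h3.
  by rewrite -(ler_pM2r h4) mul1r.
have h2 : qf N (F i) (F i) <= k%:R * p%:R.
  rewrite -(trace_id hk hu); apply: (@sum_nat_term _ 1 k.+1 (fun i => qf N (F i) (F i))).
    by rewrite ltnS.
  by move=> i'; apply: pN.
have h3 := amgm_abs 'e_j (F i) hN pN.
have hk1 : 1 <= (k%:R : R) by rewrite ler1n.
have hk0 : 0 < (k%:R : R) by lra.
rewrite normrM ger0_norm ?invr_ge0 ?ler0n //.
have hQ : `|qf N 'e_j (F i)| <= (l^-1 + k%:R * p%:R) / 2 by lra.
have hki : k%:R^-1 <= (1 : R) by rewrite invr_le1 // ?unitfE ?lt0r_neq0.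
have hp0 : 0 <= (p%:R : R) by rewrite ler0n.
have hl0 : 0 <= l^-1 by rewrite invr_ge0 ltW.
apply: (le_trans (ler_wpM2l _ hQ)); first by rewrite invr_ge0 ltW.
rewrite mulrA mulrDr mulrA mulVf ?lt0r_neq0 // mul1r.
have : k%:R^-1 * l^-1 <= l^-1 by rewrite -[X in _ <= X]mul1r ler_wpM2r.
move=> h5; lra.
Qed.

Lemma domination {R : realType} p (F : nat -> 'rV[R]_p) k K (N : 'M[R]_p) a e m :
  (forall j : 'I_p, exists c : nat -> R,
    'e_j = \sum_(1 <= i < k.+1) c i *: F i /\
    forall i, (1 <= i <= k)%N -> `|c i| <= K) ->
  (forall i, (1 <= i <= k)%N -> `|qf N a (F i)| <= m) ->
  `|qf N a e| <= K * k%:R * m * \sum_j `|e 0 j|.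
Proof.
move=> hc hm; rewrite {1}(row_sum_delta e) qf_sumr mulr_sumr.
apply: (le_trans (ler_norm_sum _ _ _)); apply: ler_sum => j _.
rewrite qfZr normrM mulrC; apply: ler_wpM2r; first exact: normr_ge0.
have [c [-> hcb]] := hc j; rewrite qf_sumr.
apply: (le_trans (ler_norm_sum _ _ _)).
apply: (@le_trans _ _ (\sum_(1 <= i < k.+1) K * m)).
  rewrite big_nat [X in _ <= X]big_nat; apply: ler_sum => i hi.
  rewrite qfZr normrM.
  by apply: ler_pM; [exact: normr_ge0|exact: normr_ge0|exact: hcb|exact: hm].
rewrite sumr_const_nat subn1 /= -(mulr_natr (K * m)); lra.
Qed.


Lemma cont_sum {R : realType} (T : topologicalType) (r : seq nat) (g : nat -> T -> R) :
  (forall i, continuous (g i)) -> continuous (fun t => \sum_(i <- r) g i t).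
Proof.
move=> hg; elim: r => [|a r IH].
  under eq_fun do rewrite big_nil; exact: cst_continuous.
under eq_fun do rewrite big_cons.
by move=> t; apply: continuousD; [exact: hg|exact: IH].
Qed.

Lemma near_pos {R : realType} (P : R -> Prop) :
  (\forall l \near 0^'+, P l) -> exists2 l, 0 < l & P l.
Proof.
move=> h; have H : \forall l \near (0 : R)^'+, 0 < l /\ P l.
  by apply: filterI => //; exact: nbhs_right_gt.
by have [l [hl hP]] := filter_ex H; exists l.
Qed.

Lemma unif_cont_real {R : realType} (X Th : metricType R) (h : X * Th -> R) :
  compact [set: X] -> compact [set: Th] -> continuous h ->
  forall e, 0 < e -> \forall d \near (0 : R)^'+,
    forall (q : X * Th) (z : X), mdist q.1 z < d -> `|h q - h (z, q.2)| < e.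
Proof.
move=> cX cTh hc e he.
have cXT : compact [set: X * Th] by rewrite -setXTT; exact: compact_setX.
move/compact_near_coveringP : cXT => cov.
have : \forall d \near (0 : R)^'+, [set: X * Th] `<=`
    (fun q => forall z : X, mdist q.1 z < d -> `|h q - h (z, q.2)| < e).
  apply: (cov R (0 : R)^'+ (fun d q => forall z : X, mdist q.1 z < d -> `|h q - h (z, q.2)| < e)).
  move=> q0 _.
  have e2 : 0 < e / 2 by rewrite divr_gt0.
  have := @cvgr_dist_lt _ _ _ _ _ h (h q0) (hc q0) _ e2.
  move=> H0; have [r hr hball] := (nbhs_ballP _ _).1 (H0 _).
  have r2 : 0 < r / 2 by rewrite divr_gt0.
  exists (ball q0 (r / 2), [set d : R | d < r / 2]).
    by split; [exact: nbhsx_ballx | exact: nbhs_right_lt].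
  case=> q d [hq hd] z hz /=. simpl in hq, hd, hz.
  have hq' : ball q0 r q by apply: le_ball hq; rewrite ler_pdivrMr // ler_pMr // ler1n.
  have hz' : ball q0 r (z, q.2).
    move: hq => [hq1 hq2]; split => /=.
      have E1 := ballEmdist q0.1 (r / 2); have E2 := ballEmdist q0.1 r.
      have hq1' : mdist q0.1 q.1 < r / 2 by move: hq1; rewrite E1.
      rewrite E2 /=.
      apply: (le_lt_trans (metric_triangle _ q.1 _)).
      lra.
    by apply: le_ball hq2; rewrite ler_pdivrMr // ler_pMr // ler1n.
  have h1 := hball _ hq'; have h2 := hball _ hz'.
  move: h1 h2 => /= h1 h2.
  rewrite -(subrKA (h q0)) (le_lt_trans (ler_normD _ _)) //.
  rewrite distrC; lra.
by apply: filterS => d hd q z hz; exact: (hd q I z hz).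
Qed.

Lemma qf_matD {R : realType} p (A B : 'M[R]_p) v : qf (A + B) v v = qf A v v + qf B v v.
Proof. by rewrite /qf mulmxDr mulmxDl mxE. Qed.

Lemma sq_ge0 {R : realType} p (v : 'rV[R]_p) : 0 <= sq v.
Proof. by apply: sumr_ge0 => j _; apply: sqr_ge0. Qed.

Lemma unif_lam {R : realType} (Th : metricType R) p (G : Th -> 'M[R]_p) :
  compact [set: Th] -> (forall j l, continuous (fun t => G t j l)) ->
  (forall t, G t \in unitmx) -> (forall t, (G t)^T = G t) -> (forall t, psd (G t)) ->
  exists2 l, 0 < l & forall t v, l * sq v <= qf (G t) v v.
Proof.
move=> cTh hc hu hT hp.
have : \forall l \near (0 : R)^'+, [set: Th] `<=`
    (fun t => forall v, l * sq v <= qf (G t) v v).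
  apply: ((compact_near_coveringP _).1 cTh R (0 : R)^'+
    (fun l t => forall v, l * sq v <= qf (G t) v v)) => t0 _.
  have [l0 hl0 hlam] := lam_single (hu t0) (hT t0) (hp t0).
  pose a := l0 / (2 * (p%:R + 1)).
  have hp0 : (0 : R) <= p%:R by rewrite ler0n.
  have ha : 0 < a by rewrite /a divr_gt0 //; lra.
  have hap : a * p%:R <= l0 / 2.
    rewrite /a mulrAC ler_pdivrMr; last by lra.
    have -> : l0 / 2 * (2 * (p%:R + 1)) = l0 * (p%:R + 1) by field.
    by rewrite ler_wpM2l ?ltW //; lra.
  have H : \forall t \near t0, forall j l, `|G t0 j l - G t j l| < a.
    apply: filter_forall => j; apply: filter_forall => l.
    exact: (@cvgr_dist_lt _ _ _ _ _ (fun t => G t j l) _ (hc j l t0) _ ha).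
  exists ((fun t => forall j l, `|G t0 j l - G t j l| < a), [set l : R | l < l0 / 2]).
    by split; [exact: H | apply: nbhs_right_lt; rewrite divr_gt0].
  case=> t l [ht hl] v /=.
  have hD : `|qf (G t - G t0) v v| <= a * p%:R * sq v.
    apply: perturb => j k; rewrite !mxE distrC; exact: ltW.
  have e : G t = G t0 + (G t - G t0) by rewrite addrC subrK.
  rewrite e qf_matD.
  have h1 := hlam v; have h2 := sq_ge0 v.
  have h3 : l * sq v <= l0 / 2 * sq v by rewrite ler_wpM2r // ltW.
  have h4 : a * p%:R * sq v <= l0 / 2 * sq v by rewrite ler_wpM2r.
  have h5 := ler_normr (qf (G t - G t0) v v).
  move: hD; rewrite -normrN => hD.
  have h6 := ler_norm (- qf (G t - G t0) v v).
  lra.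
move=> H; have [l hl Hl] := near_pos H; exists l => // t v; exact: Hl.
Qed.


Lemma cont_slice {R : realType} (X Th : metricType R) p (g : X * Th -> 'rV[R]_p) a :
  continuous g -> continuous (fun t => g (a, t)).
Proof.
move=> hg t; apply: (@continuous_comp _ _ _ (fun t => (a, t)) g); last exact: hg.
by apply: cvg_pair; [exact: cvg_cst | exact: cvg_id].
Qed.

Lemma cont_entry {R : realType} (T : topologicalType) p (g : T -> 'rV[R]_p) j :
  continuous g -> continuous (fun t => g t 0 j).
Proof.
move=> hg t; apply: (@continuous_comp _ _ _ g (fun M : 'rV[R]_p => M 0 j)); first exact: hg.
exact: coord_continuous.
Qed.

Lemma gram_entry {R : realType} p (F : nat -> 'rV[R]_p) n j l :
  gram F n j l = \sum_(1 <= i < n.+1) (F i 0 j * F i 0 l).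
Proof.
rewrite /gram summxE; apply: eq_bigr => i _.
by rewrite mxE big_ord1 mxE.
Qed.

Lemma cont_info {R : realType} (X Th : metricType R) p (f : Th -> X -> 'rV[R]_p)
  (x : nat -> X) n j l : continuous (fun z : X * Th => f z.2 z.1) ->
  continuous (fun t => (n%:R^-1 *: gram (fun i => f t (x i)) n) j l).
Proof.
move=> hc.
have e : (fun t => (n%:R^-1 *: gram (fun i => f t (x i)) n) j l) =
   (fun t => n%:R^-1 * \sum_(i <- index_iota 1 n.+1) (f t (x i) 0 j * f t (x i) 0 l)).
  by apply: funext => t; rewrite mxE gram_entry.
rewrite e => t.
apply: (@continuousM _ _ (fun=> n%:R^-1)
  (fun t => \sum_(i <- index_iota 1 n.+1) (f t (x i) 0 j * f t (x i) 0 l))).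
  exact: cst_continuous.
apply: cont_sum => i {}t.
apply: (@continuousM _ _ (fun t => f t (x i) 0 j) (fun t => f t (x i) 0 l)).
  exact: (cont_entry (j:=j) (cont_slice (a:=x i) hc)).
exact: (cont_entry (j:=l) (cont_slice (a:=x i) hc)).
Qed.

Lemma final_arith {R : realType} (c k p eps : R) : 0 <= c -> 0 < p -> 0 < eps ->
  c * ((1 - (p * eps / 2) / (2 * (1 + p * eps / 2))) ^+ 2 * p) <= k ->
  c <= (p^-1 + eps / 2) * k.
Proof.
move=> hc hp he; set a := p * eps / 2; set e := a / (2 * (1 + a)).
have ha : 0 < a by rewrite /a divr_gt0 // mulr_gt0.
have h1 : 1 <= (1 - e) ^+ 2 * (1 + a).
  have -> : (1 - e) ^+ 2 * (1 + a) = 1 + e ^+ 2 * (1 + a).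
    by rewrite /e; field; lra.
  rewrite lerDl; apply: mulr_ge0; [exact: sqr_ge0 | lra].
have h2 : (p^-1 + eps / 2) = (1 + a) / p by rewrite /a; field; lra.
rewrite h2 => h; rewrite -(ler_pM2l hp).
apply: (@le_trans _ _ (p * c * ((1 - e) ^+ 2 * (1 + a)))).
  by rewrite -{1}(mulr1 (p * c)) ler_wpM2l // mulr_ge0 // ltW.
have -> : p * c * ((1 - e) ^+ 2 * (1 + a)) = (1 + a) * (c * ((1 - e) ^+ 2 * p)) by ring.
have -> : p * ((1 + a) / p * k) = (1 + a) * k by field; lra.
by rewrite ler_wpM2l //; lra.
Qed.


Lemma ej_neq0 {R : realType} p (j : 'I_p) : ('e_j : 'rV[R]_p) != 0.
Proof.
apply/eqP => h; have := congr1 (fun M : 'rV[R]_p => M 0 j) h.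
by rewrite !mxE !eqxx /= => /eqP; rewrite oner_eq0.
Qed.

Lemma key (R : realType) (X Th : metricType R) (p : nat)
  (f : Th -> X -> 'rV[R]_p)
  (hX : compact [set: X]) (hTh : compact [set: Th])
  (hcont : continuous (fun z : X * Th => f z.2 z.1))
  (hp : (2 <= p)%N)
  (nst : nat) (x : nat -> X)
  (hst : forall th : Th, posdef (infomat f x nst th))
  (theta : nat -> Th)
  (hrec : forall n : nat, (nst <= n)%N -> forall z : X,
      wynn_crit f x n (theta n) z <= wynn_crit f x n (theta n) (x n.+1))
  (eps : R) (heps : 0 < eps) :
  exists2 d : R, 0 < d & forall k, (nst <= k)%N -> forall S : set X, diam_le S d ->
    S (x k.+1) ->
    \sum_(1 <= i < k.+1) (if `[< S (x i) >] then 1 else 0) <= (p%:R^-1 + eps / 2) * k%:R.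
Proof.
have p0 : (0 < p)%N by apply: leq_trans hp.
pose j0 : 'I_p := Ordinal p0.
have nst0 : (0 < nst)%N.
  case: nst hst hrec => // hst _.
  have [_ /(_ _ (ej_neq0 j0))] := hst (theta 0).
  by rewrite /infomat big_geq // scaler0 mulmx0 mul0mx mxE ltxx.
pose G := infomat f x nst.
have hGu : forall t, G t \in unitmx by move=> t; apply: unit_of_pd; exact: (hst t).2.
have hGT : forall t, (G t)^T = G t by move=> t; exact: (hst t).1.
have hGp : forall t, psd (G t).
  move=> t v; case: (eqVneq v 0) => [->|hv]; first by rewrite /qf mul0mx mul0mx mxE.
  exact: ltW ((hst t).2 v hv).
have hGc : forall j l, continuous (fun t => G t j l) by move=> j l; exact: cont_info.
have [l hl hlam] := unif_lam hTh hGc hGu hGT hGp.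
pose K := l^-1 + p%:R.
have hdec : forall t (j : 'I_p), exists c : nat -> R,
    'e_j = \sum_(1 <= i < nst.+1) c i *: f t (x i) /\
    forall i, (1 <= i <= nst)%N -> `|c i| <= K.
  by move=> t; apply: (decomp_bound (F := fun i => f t (x i)) nst0 (hGu t) hl (hlam t)).
have hK : 0 < K by rewrite /K addr_gt0 ?invr_gt0 // ltr0n.
have hpR : (0 : R) < p%:R by rewrite ltr0n.
have hnR : (0 : R) < nst%:R by rewrite ltr0n.
pose a := p%:R * eps / 2.
have ha : 0 < a by rewrite /a divr_gt0 // mulr_gt0.
pose eta := a / (2 * (1 + a)).
have heta0 : 0 < eta by rewrite /eta divr_gt0 //; lra.
have heta1 : eta < 1.
  rewrite /eta ltr_pdivrMr; lra.
pose del := eta / (K * nst%:R * p%:R).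
have hdel : 0 < del by rewrite /del divr_gt0 // !mulr_gt0.
have hU : \forall d \near (0 : R)^'+, forall j : 'I_p,
    forall (q : X * Th) (z : X), mdist q.1 z < d ->
      `|f q.2 q.1 0 j - f q.2 z 0 j| < del.
  apply: filter_forall => j.
  apply: (unif_cont_real (h := fun q : X * Th => f q.2 q.1 0 j) hX hTh _ hdel).
  exact: (cont_entry (j:=j) hcont).
have [d hd hUd] := near_pos hU.
exists (d / 2); first by rewrite divr_gt0.
move=> k hk S hS hSx.
have k0 : (0 < k)%N by apply: leq_trans hk.
have hkR : (0 : R) < k%:R by rewrite ltr0n.
pose t := theta k.
pose F := fun i => f t (x i).
pose M := k%:R^-1 *: gram F k.
have hMu : M \in unitmx.
  apply: unit_of_pd => v hv.
  have h1 : 0 < qf (nst%:R^-1 *: gram F nst) v v := (hst t).2 v hv.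
  rewrite /M qf_scale; apply: mulr_gt0; first by rewrite invr_gt0.
  apply: lt_le_trans (gram_mono F v hk).
  move: h1; rewrite qf_scale.
  by rewrite pmulr_rgt0 // invr_gt0.
pose N := invmx M.
have hNT : N^T = N by rewrite /N /M invT.
have hMT : M^T = M by rewrite /M infoT.
have hMp : psd M.
  by move=> v; rewrite /M qf_scale; apply: mulr_ge0; [rewrite invr_ge0 ler0n|apply: psd_gram].
have pN : psd N by apply: psd_inv.
pose fz := F k.+1.
pose m := qf N fz fz.
have hmax : forall z, qf N (f t z) (f t z) <= m := hrec k hk.
have hmp : p%:R <= m.
  have := trace_id k0 hMu; rewrite -/M -/N => htr.
  have : \sum_(1 <= i < k.+1) qf N (F i) (F i) <= \sum_(1 <= i < k.+1) m.
    by apply: ler_sum => i _; apply: hmax.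
  rewrite htr sumr_const_nat subn1 /= -(mulr_natl m) => h.
  by rewrite -(ler_pM2l hkR).
have hm0 : 0 < m by lra.
have hbnd : forall i, (1 <= i <= nst)%N -> `|qf N fz (F i)| <= m.
  move=> i hi; have := amgm_abs fz (F i) hNT pN; have := hmax (x i).
  rewrite -/(F i) -/m; lra.
have hclose : forall i, (1 <= i <= k)%N -> S (x i) -> (1 - eta) * m <= qf N fz (F i).
  move=> i hi hSi.
  pose e := fz - F i.
  have hdom := @domination R p F nst K N fz e m (hdec t) hbnd.
  have hsum : \sum_j `|e 0 j| <= p%:R * del.
    apply: (@le_trans _ _ (\sum_(j < p) del)); last by rewrite sumr_const card_ord mulr_natl.
    apply: ler_sum => j _; rewrite /e mxE mxE; apply: ltW.
    have := hUd j (x k.+1, t) (x i); rewrite /=; apply.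
    by apply: le_lt_trans (hS _ _ hSx hSi) _; rewrite ltr_pdivrMr // ltr_pMr // ltr1n.
  have hd2 : K * nst%:R * m * \sum_j `|e 0 j| <= eta * m.
    apply: (le_trans (ler_wpM2l _ hsum)).
      by apply: mulr_ge0; [rewrite mulr_ge0 // ltW|exact: ltW].
    have -> : K * nst%:R * m * (p%:R * del) = eta * m.
      by rewrite /del; field; rewrite !lt0r_neq0.
    exact: lexx.
  have e1 : F i = fz - e by rewrite /e opprB addrC subrK.
  rewrite e1 qfDr qfNr -/m.
  have := ler_norm (qf N fz e); lra.
have hsq : \sum_(1 <= i < k.+1) (qf N fz (F i)) ^+ 2 = k%:R * m.
  exact: (sumsq_id fz k0 hMu).
set c := \sum_(1 <= i < k.+1) _.
have hc0 : 0 <= c.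
  by apply: sumr_ge0 => i _; case: asboolP.
have h1 : c * ((1 - eta) * m) ^+ 2 <= k%:R * m.
  rewrite /c mulr_suml -hsq big_nat [X in _ <= X]big_nat; apply: ler_sum => i hi.
  case: asboolP => hSi; last by rewrite mul0r sqr_ge0.
  rewrite mul1r !expr2.
  have hy : 0 <= (1 - eta) * m by apply: mulr_ge0; lra.
  have := hclose i hi hSi => hQ.
  by apply: ler_pM.
have h2 : c * ((1 - eta) ^+ 2 * p%:R) <= k%:R.
  rewrite -(ler_pM2r hm0); apply: le_trans h1.
  have hw : 0 <= c * (1 - eta) ^+ 2 by apply: mulr_ge0 => //; apply: sqr_ge0.
  have -> : c * ((1 - eta) ^+ 2 * p%:R) * m = (c * (1 - eta) ^+ 2 * m) * p%:R by ring.
  have -> : c * ((1 - eta) * m) ^+ 2 = (c * (1 - eta) ^+ 2 * m) * m by ring.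
  by apply: ler_wpM2l => //; apply: mulr_ge0 => //; apply: ltW.
exact: (final_arith hc0 hpR heps h2).
Qed.


Unset Implicit Arguments.
Set Strict Implicit.

Theorem lemma2p2 (R : realType) (X Th : metricType R) (p : nat)
  (f : Th -> X -> 'rV[R]_p)
  (hX : compact [set: X]) (hTh : compact [set: Th])
  (hspan : forall th : Th, exists s : seq X,
      (<<map (f th) s>>%VS = fullv))
  (hcont : continuous (fun z : X * Th => f z.2 z.1))
  (hp : (2 <= p)%N)
  (nst : nat) (x : nat -> X)
  (hst : forall th : Th, posdef (infomat f x nst th))
  (theta : nat -> Th)
  (hrec : forall n : nat, (nst <= n)%N -> forall z : X,
      wynn_crit f x n (theta n) z <= wynn_crit f x n (theta n) (x n.+1))
  (eps : R) (heps : 0 < eps) :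
  exists d : R, 0 < d /\ exists n0 : nat, (nst <= n0)%N /\
    forall (S : set X), S !=set0 -> diam_le S d ->
    forall n : nat, (n0 <= n)%N -> design x n S <= p%:R^-1 + eps.
Proof.
have [d hd hkey] := key hX hTh hcont hp hst hrec heps.
exists d; split => //.
pose al := p%:R^-1 + eps / 2.
have hpR : (0 : R) < p%:R by rewrite ltr0n; apply: leq_trans hp.
have hal : 0 <= al by rewrite /al addr_ge0 ?invr_ge0 ?ltW // divr_gt0.
have hy : 0 <= (nst%:R + 2) / eps by rewrite divr_ge0 ?ltW //; lra.
pose N := Num.Def.archi_bound ((nst%:R + 2) / eps).
have hN : (nst%:R + 2) / eps < N%:R := archi_boundP hy.
exists (nst + N)%N; split; first exact: leq_addr.
move=> S _ hS.
pose c n := \sum_(1 <= i < n.+1) (if `[< S (x i) >] then (1 : R) else 0).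
have hcl : forall t, c (nst + t)%N <= nst%:R \/ c (nst + t)%N <= al * (nst + t)%N%:R + 1.
  elim => [|t IH].
    left; rewrite addn0 /c.
    apply: (@le_trans _ _ (\sum_(1 <= i < nst.+1) (1 : R))).
      by apply: ler_sum => i _; case: asboolP.
    by rewrite sumr_const_nat subn1.
  have e : c (nst + t.+1)%N = c (nst + t)%N + (if `[< S (x (nst + t).+1) >] then 1 else 0).
    by rewrite /c addnS [in LHS]big_nat_recr.
  rewrite e; case: asboolP => hSx.
    right; have := hkey (nst + t)%N (leq_addr _ _) S hS hSx.
    rewrite -/(c (nst + t)%N) -/al -addn1 natrD => h.
    have : al * (nst + t)%N%:R <= al * (nst + t)%N%:R + al by lra.
    lra.
  rewrite addr0; case: IH => h; [by left | right].
  rewrite -addn1 natrD; lra.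
move=> n hn.
have [t ht] : exists t, n = (nst + t)%N by exists (n - nst)%N; rewrite subnKC // (leq_trans _ hn) // leq_addr.
subst n.
have hNn : N%:R <= (nst + t)%N%:R :> R.
  by rewrite ler_nat; exact: leq_trans (leq_addl nst N) hn.
have hn0 : (0 : R) < (nst + t)%N%:R.
  apply: lt_le_trans hNn; apply: le_lt_trans hN; exact: hy.
have hne : nst%:R + 2 < (nst + t)%N%:R * eps.
  by rewrite -ltr_pdivrMr //; apply: lt_le_trans hN hNn.
rewrite /design -/(c (nst + t)%N) ler_pdivrMl //.
have hpi : 0 <= p%:R^-1 :> R by rewrite invr_ge0 ltW.
case: (hcl t) => h.
  apply: (le_trans h); rewrite mulrDr.
  have : 0 <= (nst + t)%N%:R * p%:R^-1 :> R by apply: mulr_ge0 => //; exact: ltW.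
  lra.
apply: (le_trans h); rewrite /al mulrDr.
have -> : (p%:R^-1 + eps / 2) * (nst + t)%N%:R = (nst + t)%N%:R / p%:R + (nst + t)%N%:R * eps / 2 by ring.
have : (0 : R) <= nst%:R by rewrite ler0n.
lra.
Qed.
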